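(* On the event described in Lemma 2.4 (namely: (a) whenever $p_j$ and $a_i$ interview each other, $i\le j+8\log n$; and (b) whenever the algorithm considers a proposal to $p_j$, all $p_{j'}$ with $j'<\min(j,n-8\log n)$ are matched), suppose the Adaptive Algorithm is considering the proposal between applicant $a_{i^*}$ and position $p_{j^*}$. Then for every $k\le j^*$, the current matching $\mu$ satisfies $$\big|\{(a_i,p_j)\in\mu : i<k,\ j\ge k\}\big|\le 8\log n.$$
   Context: Logarithms are base 2. Model. Let $A=\{a_1,\dots,a_n\}$ be a set of applicants and $P=\{p_1,\dots,p_n\}$ a set of positions. Each applicant $a_i$ has a publicly known value $u_i\in\mathbb R$ and each position $p_j$ a publicly known value $v_j\in\mathbb R$, indexed so that $u_1\ge u_2\ge\dots\ge u_n$ and $v_1\ge v_2\ge\dots\ge v_n$. The random variables $\epsilon^A_{ij}$, $\epsilon^P_{ji}$ ($i,j\in[n]$) are mutually independent and identically distributed according to a known distribution symmetric about $0$ (mean zero). The utility of $a_i$ for $p_j$ is $v_j+\epsilon^A_{ij}$ and the utility of $p_j$ for $a_i$ is $u_i+\epsilon^P_{ji}$; the values $\epsilon^A_{ij},\epsilon^P_{ji}$ become known only when $a_i$ and $p_j$ interview each other. The observed utility $v^o_{ij}$ of $a_i$ for $p_j$ equals $v_j+\epsilon^A_{ij}$ if $a_i,p_j$ have interviewed and $v_j$ otherwise; $u^o_{ji}$ is defined symmetrically ($u_i+\epsilon^P_{ji}$ or $u_i$). Write $p_j\succ_{a_i}p_{j'}$ iff $v^o_{ij}>v^o_{ij'}$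 and $a_i\succ_{p_j}a_{i'}$ iff $u^o_{ji}>u^o_{ji'}$ (ties broken in favor of the smaller index); every agent prefers any partner to being unmatched. For a matching $\mu$, $\mu(x)$ denotes the partner of $x$ ($\emptyset$ if unmatched). Adaptive Algorithm. Initially all agents are unmatched and $v^o_{ij}=v_j$, $u^o_{ji}=u_i$ for all $i,j$. For an unmatched applicant $a$, let $\beta(a)$ be $a$'s most preferred position (w.r.t. current observed utilities) that has not yet rejected $a$. While some applicant is unmatched: let $j^*$ be the smallest index such that $\beta(a_i)=p_{j^*}$ for some unmatched $a_i$; let $a_{i^*}$ be $p_{j^*}$'s favorite applicant among $\{a_i:\beta(a_i)=p_{j^*},\mu(a_i)=\emptyset\}$. If $a_{i^*},p_{j^*}$ have not interviewed and ($i^*\le j^*$ or $a_{i^*}\succ_{p_{j^*}}\mu(p_{j^*})$), then they interview and $v^o_{i^*j^*},u^o_{j^*i^*}$ are updated. Otherwise: if $\mu(p_{j^*})\succ_{p_{j^*}}a_{i^*}$, then $p_{j^*}$ rejects $a_{i^*}$; else $p_{j^*}$ rejects $\mu(p_{j^*})$ (if nonempty) and $a_{i^*},p_{j^*}$ become matched. When all applicants are matched, output $\mu$. *)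

(* Defs.v *)
From HB Require Import structures.
From mathcomp Require Import all_boot all_order all_algebra.
From mathcomp Require Import all_classical all_reals all_analysis.
Set Implicit Arguments. Unset Strict Implicit. Unset Printing Implicit Defensive.
Import Order.TTheory GRing.Theory Num.Theory.
Local Open Scope ring_scope.

Definition log2 {R : realType} (x : R) : R := ln x / ln 2.

(* Applicants and positions are both indexed by 'I_n; the ordinal i stands
   for a_{i+1} (resp. p_{i+1}) of the paper (paper indices are 1-based). *)
Record state (n : nat) := State {
  mu  : {ffun 'I_n -> option 'I_n};      (* mu i = Some j : a_i matched to p_j *)
  itv : {set 'I_n * 'I_n};               (* (i,j) : a_i and p_j have interviewed *)
  rej : {set 'I_n * 'I_n}                (* (i,j) : p_j has rejected a_i *)
}.

Section Algo.
Variables (R : realType) (n : nat).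
Variables (u v : 'I_n -> R) (eA eP : 'I_n -> 'I_n -> R).

Definition vo (s : state n) (i j : 'I_n) : R :=
  v j + (if (i, j) \in itv s then eA i j else 0).
Definition uo (s : state n) (j i : 'I_n) : R :=
  u i + (if (i, j) \in itv s then eP j i else 0).

Definition prefA (s : state n) (i j j' : 'I_n) : bool :=
  (vo s i j' < vo s i j) || ((vo s i j == vo s i j') && (j < j')%N).
Definition prefP (s : state n) (j i i' : 'I_n) : bool :=
  (uo s j i' < uo s j i) || ((uo s j i == uo s j i') && (i < i')%N).

Definition beta (s : state n) (i : 'I_n) : option 'I_n :=
  [pick j | ((i, j) \notin rej s) &&
     [forall j', (((i, j') \notin rej s) && (j' != j)) ==> prefA s i j j']].

Definition muP (s : state n) (j : 'I_n) : option 'I_n :=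
  [pick i | mu s i == Some j].

Definition proposers (s : state n) (j : 'I_n) : {set 'I_n} :=
  [set i | (mu s i == None) && (beta s i == Some j)].

Definition jstar (s : state n) : option 'I_n :=
  [pick j | (proposers s j != finset.set0) &&
     [forall j' : 'I_n, (j' < j)%N ==> (proposers s j' == finset.set0)]].

Definition istar (s : state n) (j : 'I_n) : option 'I_n :=
  [pick i | (i \in proposers s j) &&
     [forall i', ((i' \in proposers s j) && (i' != i)) ==> prefP s j i i']].

Definition betterP (s : state n) (j i : 'I_n) (o : option 'I_n) : bool :=
  if o is Some i' then prefP s j i i' else true.

Definition step (s : state n) : state n :=
  match jstar s with
  | None => s
  | Some j =>
    match istar s j with
    | None => s
    | Some i =>
      if ((i, j) \notin itv s) && ((i <= j)%N || betterP s j i (muP s j)) then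
        State (mu s) ((i, j) |: itv s) (rej s)
      else match muP s j with
        | Some i' =>
          if prefP s j i' i then State (mu s) (itv s) ((i, j) |: rej s)
          else State [ffun x => if x == i then Some j
                                else if x == i' then None else mu s x]
                     (itv s) ((i', j) |: rej s)
        | None => State [ffun x => if x == i then Some j else mu s x]
                        (itv s) (rej s)
        end
    end
  end.

Definition init : state n := State [ffun _ => None] finset.set0 finset.set0.

Definition run (t : nat) : state n := iter t step init.

Definition considers (t : nat) (i j : 'I_n) : Prop :=
  jstar (run t) = Some j /\ istar (run t) j = Some i.

(* The event of Lemma 2.4 (1-based indices i.+1, j.+1). *)
Definition event_L24 : Prop :=
  (forall t (i j : 'I_n), (i, j) \in itv (run t) ->
      (i.+1)%:R <= (j.+1)%:R + 8 * log2 (n%:R : R)) /\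
  (forall t (i j : 'I_n), considers t i j ->
     forall j' : 'I_n, (j'.+1)%:R < Num.min ((j.+1)%:R) (n%:R - 8 * log2 (n%:R : R)) ->
     exists i' : 'I_n, mu (run t) i' = Some j').

End Algo.

(* Main.v *)
Require Import Defs.
From HB Require Import structures.
From mathcomp Require Import all_boot all_order all_algebra.
From mathcomp Require Import all_classical all_reals all_analysis.
From mathcomp Require Import lra.
Import Order.TTheory GRing.Theory Num.Theory.
Local Open Scope ring_scope.

Lemma prefP_total (R : realType) (n : nat) (u : 'I_n -> R) (eP : 'I_n -> 'I_n -> R)
  (s : state n) (j i i' : 'I_n) :
  i != i' -> prefP u eP s j i i' || prefP u eP s j i' i.
Proof.
move=> Hne; rewrite /prefP.
case: (ltgtP (uo u eP s j i') (uo u eP s j i)) => //= _.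
by rewrite -neq_ltn.
Qed.

Lemma step_inv (R : realType) (n : nat) (u v : 'I_n -> R) (eA eP : 'I_n -> 'I_n -> R)
  (s : state n) :
  (forall i j, mu s i = Some j -> (i, j) \in itv s) ->
  forall i j, mu (step u v eA eP s) i = Some j -> (i, j) \in itv (step u v eA eP s).
Proof.
move=> H i j; rewrite /step.
case Ej: (jstar _ _ s) => [jj|]; last exact: H.
case Ei: (istar _ _ _ _ s jj) => [ii|]; last exact: H.
have Hii : ii \in proposers v eA s jj.
  by move: Ei; rewrite /istar; case: pickP => // x /andP[? _] [<-].
have Hnone : mu s ii == None by move: Hii; rewrite inE => /andP[].
case: ifP => Hc.
  by move=> /= /H; rewrite in_setU1 orbC => ->.
case Em: (muP s jj) => [i'|].
  have Hi' : mu s i' == Some jj.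
    by move: Em; rewrite /muP; case: pickP => // x Hx [<-].
  case: ifP => Hp; first exact: H.
  rewrite /= ffunE; case: eqP => [-> [<-]|_]; last first.
    by case: eqP => // _ /H.
  move: Hc; case Hitv: ((ii, jj) \in itv s) => //=.
  rewrite /betterP => /negbT; rewrite negb_or => /andP[_ Hnp].
  have Hne : ii != i'.
    apply/eqP => E; move: Hnone; rewrite E (eqP Hi') //.
  move: Hnp; rewrite Em => Hnp.
  by move: (@prefP_total _ _ u eP s jj _ _ Hne); rewrite (negbTE Hnp) Hp.
rewrite /= ffunE; case: eqP => [-> [<-]|_ /H //].
by move: Hc; rewrite /betterP Em orbT andbT; case: ((ii, jj) \in itv s).
Qed.

Lemma run_inv (R : realType) (n : nat) (u v : 'I_n -> R) (eA eP : 'I_n -> 'I_n -> R) t :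
  forall i j, mu (run u v eA eP t) i = Some j -> (i, j) \in itv (run u v eA eP t).
Proof.
elim: t => [|t IH] i j.
  by rewrite /run /= ffunE.
rewrite /run iterS -/(run u v eA eP t); exact: (@step_inv _ _ u v eA eP _ IH).
Qed.

Theorem claim2p6 (R : realType) (n : nat) (u v : 'I_n -> R)
  (eA eP : 'I_n -> 'I_n -> R)
  (hu : forall i i' : 'I_n, (i <= i')%N -> u i' <= u i)
  (hv : forall j j' : 'I_n, (j <= j')%N -> v j' <= v j) :
  event_L24 u v eA eP ->
  forall (t : nat) (istr jstr : 'I_n), considers u v eA eP t istr jstr ->
  forall k : nat, (k <= jstr.+1)%N ->
    (#|[set p : 'I_n * 'I_n |
         (mu (run u v eA eP t) p.1 == Some p.2) &&
         (p.1.+1 < k)%N && (k <= p.2.+1)%N]|)%:R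
      <= 8 * log2 (n%:R : R).
Proof.
move=> [Ha Hb] t istr jstr Hcons k Hk.
set s := run u v eA eP t.
set L := 8 * log2 (n%:R : R).
have Hn : (0 < n)%N := leq_ltn_trans (leq0n _) (ltn_ord jstr).
have L0 : 0 <= L.
  rewrite /L /log2; apply: mulr_ge0 => //; apply: divr_ge0.
    by apply: ln_ge0; rewrite ler1n.
  by apply: ltW; apply: ln_gt0; rewrite ltr1n.
case: k Hk => [|K] Hk.
  rewrite (_ : [set _ | _] = finset.set0) ?cards0 //.
  by apply/setP => p; rewrite !inE /= ltn0 andbF.
rewrite ltnS in Hk.
have KN : (K < n)%N by apply: leq_ltn_trans Hk _.
set S := [set _ | _].
pose A2 := [set i : 'I_n | (i < K)%N && [exists j : 'I_n, (mu s i == Some j) && (K <= j)%N]].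
pose G := [set j : 'I_n | j%:R + L < K%:R].
pose A1 := [set i : 'I_n | (i < K)%N && [exists j : 'I_n, (mu s i == Some j) && (j \in G)]].
have HS : (#|S| <= #|A2|)%N.
  rewrite -(card_in_imset (f := fst)).
    apply: subset_leq_card; apply/fintype.subsetP => x /imsetP [[a b]].
    rewrite inE /= => /andP[/andP[Hm Ha1] Hb1] ->; rewrite inE /=.
    rewrite -ltnS Ha1 /=; apply/existsP; exists b; by rewrite Hm.
  move=> [a b] [a' b']; rewrite !inE /= => /andP[/andP[/eqP H1 _] _] /andP[/andP[/eqP H2 _] _] E.
  by move: H1 H2; rewrite E => -> [->].
have HG : (#|G| <= #|A1|)%N.
  pose f i := odflt jstr (mu s i).
  apply: (leq_trans _ (leq_imset_card f A1)).
  apply: subset_leq_card; apply/fintype.subsetP => j; rewrite inE => Hj.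
  have Hj1 : (j.+1)%:R < Num.min ((jstr.+1)%:R) (n%:R - L) :> R.
    rewrite lt_min; apply/andP; split.
      rewrite ltr_nat ltnS; apply: leq_trans Hk; rewrite -(ltr_nat R); lra.
    have : (K.+1)%:R <= n%:R :> R by rewrite ler_nat.
    rewrite -!natr1 => HK; lra.
  have [i' Hi'] := Hb t istr jstr Hcons j Hj1.
  have Hai := Ha t i' j (@run_inv _ _ u v eA eP t _ _ Hi').
  apply/imsetP; exists i'; last by rewrite /f Hi'.
  rewrite inE; apply/andP; split; last first.
    apply/existsP; exists j; rewrite Hi' eqxx /=; by rewrite inE.
  rewrite -(ltr_nat R); rewrite -/L -!natr1 in Hai; lra.
have HA : (#|A1| + #|A2| <= K)%N.
  rewrite -cardsUI (_ : A1 :&: A2 = finset.set0) ?cards0 ?addn0; last first.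
    apply/setP => i; rewrite !inE.
    apply/negbTE/negP => /andP[/andP[_ /existsP[j /andP[/eqP H1 H2]]] /andP[_ /existsP[j' /andP[/eqP H1' H2']]]].
    move: H1'; rewrite H1 => -[E]; move: H2 H2'; rewrite E inE -(ler_nat R) => H2 H2'.
    exfalso; lra.
  have Hw : (K <= n)%N by apply: ltnW.
  apply: (leq_trans _ (leq_trans (leq_imset_card (widen_ord Hw) [set: 'I_K]) _)).
    apply: subset_leq_card; apply/fintype.subsetP => i; rewrite !inE => /orP[] /andP[Hi _];
      apply/imsetP; exists (Ordinal Hi) => //; by apply: val_inj.
  by rewrite cardsT card_ord.
have HGL : K%:R <= #|G|%:R + L.
  rewrite leNgt; apply/negP => Hlt.
  have gK : (#|G| < K)%N.
    by rewrite -(ltr_nat R); lra.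
  have gN : (#|G| < n)%N by apply: ltn_trans KN.
  have Hw : (#|G|.+1 <= n)%N by [].
  have : (#|G|.+1 <= #|G|)%N.
    rewrite -{1}(card_ord #|G|.+1) -cardsT -(card_imset _ (f := widen_ord Hw)); last first.
      by move=> x y /(congr1 val) /= E; apply: val_inj.
    apply: subset_leq_card; apply/fintype.subsetP => j /imsetP [x _ ->]; rewrite inE /=.
    have : (x%:R : R) <= #|G|%:R by rewrite ler_nat -ltnS.
    lra.
  by rewrite ltnn.
have : (#|S| + #|G| <= K)%N.
  by apply: leq_trans (leq_add HS HG) _; rewrite addnC.
rewrite -(ler_nat R) natrD => HH.
lra.
Qed.
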